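(* Let $H:\mathbb{R}^N\times\mathbb{R}^N\to\mathbb{R}$ be a skew-symmetric, finite, convex-concave function satisfying $|H(x_1,y_1)-H(x_2,y_2)|\le\Lambda\|x_1-x_2\|+\Lambda\|y_1-y_2\|$ for some $\Lambda>0$. Let $A\subset\mathbb{R}^N$ be a closed ball and $B\subset\mathbb{R}^N$ a compact set with non-empty interior, and fix $u\in\mathbb{R}^N$. Then there is a dense subset $A'\subset A$ such that for each $x\in A'$ there is a dense subset $B_{x,u}$ of $B$ with $$\nabla_1H(x,y)(u)=-\nabla_1H(x,y)(-u)\quad\text{for all }y\in B_{x,u}.$$
   Context: $\nabla_1H(x,y)(u)=\lim_{\lambda\to0^+}\frac{H(x+\lambda u,y)-H(x,y)}{\lambda}$ denotes the one-sided directional derivative in the first variable, which exists since $H$ is convex in its first variable. Skew-symmetric means $H(x,y)=-H(y,x)$; convex-concave means convex in the first variable and concave in the second. *)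

(* Defs.v *)
From Stdlib Require Import Reals Lra List.
From Stdlib Require Fin.
Open Scope R_scope.

Definition vec (N : nat) : Type := Fin.t N -> R.

Fixpoint sumfin (n : nat) : (Fin.t n -> R) -> R :=
  match n with
  | O => fun _ => 0
  | S m => fun f => f Fin.F1 + sumfin m (fun i => f (Fin.FS i))
  end.

Definition vadd {N} (x y : vec N) : vec N := fun i => x i + y i.
Definition vsub {N} (x y : vec N) : vec N := fun i => x i - y i.
Definition vscale {N} (a : R) (x : vec N) : vec N := fun i => a * x i.
Definition vopp {N} (x : vec N) : vec N := fun i => - x i.

Definition vnorm {N} (x : vec N) : R := sqrt (sumfin N (fun i => (x i) ^ 2)).
Definition vdist {N} (x y : vec N) : R := vnorm (vsub x y).

Definition open_set {N} (U : vec N -> Prop) : Prop :=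
  forall x, U x -> exists e, 0 < e /\ forall y, vdist y x < e -> U y.

Definition compact_set {N} (K : vec N -> Prop) : Prop :=
  forall (I : Type) (U : I -> vec N -> Prop),
    (forall i, open_set (U i)) ->
    (forall x, K x -> exists i, U i x) ->
    exists l : list I, forall x, K x -> exists i, In i l /\ U i x.

Definition closed_ball {N} (c : vec N) (r : R) : vec N -> Prop :=
  fun x => vdist x c <= r.

Definition nonempty_interior {N} (K : vec N -> Prop) : Prop :=
  exists x e, 0 < e /\ forall y, vdist y x < e -> K y.

Definition dense_in {N} (S A : vec N -> Prop) : Prop :=
  (forall x, S x -> A x) /\
  (forall x, A x -> forall e, 0 < e -> exists y, S y /\ vdist x y < e).

Definition skew_symmetric {N} (H : vec N -> vec N -> R) : Prop :=
  forall x y, H x y = - H y x.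

Definition convex_concave {N} (H : vec N -> vec N -> R) : Prop :=
  (forall y x1 x2 t, 0 <= t <= 1 ->
     H (vadd (vscale t x1) (vscale (1 - t) x2)) y <= t * H x1 y + (1 - t) * H x2 y) /\
  (forall x y1 y2 t, 0 <= t <= 1 ->
     t * H x y1 + (1 - t) * H x y2 <= H x (vadd (vscale t y1) (vscale (1 - t) y2))).

(* one-sided directional derivative in the first variable:
   nabla_1 H(x,y)(u) = L *)
Definition dir_deriv1 {N} (H : vec N -> vec N -> R) (x y u : vec N) (L : R) : Prop :=
  forall eps, 0 < eps -> exists delta, 0 < delta /\
    forall lam, 0 < lam < delta ->
      Rabs ((H (vadd x (vscale lam u)) y - H x y) / lam - L) < eps.

(* Main.v *)
Require Import Defs.
From Stdlib Require Import Reals Lra Lia Psatz Classical ClassicalEpsilon FunctionalExtensionality List Cantor.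
Open Scope R_scope.

Definition slope (f : R -> R) (a b : R) := (f b - f a) / (b - a).
Definition convex1 (f : R -> R) := forall a b s, 0 <= s <= 1 ->
  f (s * a + (1 - s) * b) <= s * f a + (1 - s) * f b.
Definition lip1 (f : R -> R) (M : R) := forall a b, Rabs (f a - f b) <= M * Rabs (a - b).

Lemma div_le_cross a b c d : 0 < b -> 0 < d -> a * d <= c * b -> a / b <= c / d.
Proof.
  intros Hb Hd H.
  apply Rmult_le_reg_r with (b * d). nra.
  replace (a / b * (b * d)) with (a * d) by (field; lra).
  replace (c / d * (b * d)) with (c * b) by (field; lra). exact H.
Qed.

Lemma convex_key f x y z : convex1 f -> x < y < z ->
  (z - x) * f y <= (z - y) * f x + (y - x) * f z.
Proof.
  intros Hc Hxyz.
  set (s := (z - y) / (z - x)).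
  assert (Hs : 0 <= s <= 1).
  { unfold s; split. apply Rle_mult_inv_pos; lra.
    apply Rmult_le_reg_r with (z - x). lra.
    replace ((z - y) / (z - x) * (z - x)) with (z - y) by (field; lra). lra. }
  pose proof (Hc x z s Hs) as K.
  replace (s * x + (1 - s) * z) with y in K by (unfold s; field; lra).
  apply Rmult_le_compat_l with (r := z - x) in K; [|lra].
  replace ((z - x) * (s * f x + (1 - s) * f z)) with
    ((z - y) * f x + (y - x) * f z) in K by (unfold s; field; lra).
  exact K.
Qed.

Lemma slope_l f x y z : convex1 f -> x < y < z -> slope f x y <= slope f x z.
Proof.
  intros Hc H. pose proof (convex_key f x y z Hc H). unfold slope.
  apply div_le_cross; lra.
Qed.

Lemma slope_r f x y z : convex1 f -> x < y < z -> slope f x z <= slope f y z.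
Proof.
  intros Hc H. pose proof (convex_key f x y z Hc H). unfold slope.
  apply div_le_cross; lra.
Qed.

Lemma slope_mono f a1 b1 a2 b2 : convex1 f -> a1 < b1 -> a2 < b2 -> a1 <= a2 -> b1 <= b2 ->
  slope f a1 b1 <= slope f a2 b2.
Proof.
  intros Hc H1 H2 Ha Hb.
  apply Rle_trans with (slope f a1 b2).
  - destruct (Rle_lt_or_eq_dec _ _ Hb) as [Hlt|Heq].
    + apply slope_l; auto; lra.
    + subst; lra.
  - destruct (Rle_lt_or_eq_dec _ _ Ha) as [Hlt|Heq].
    + apply slope_r; auto; lra.
    + subst; lra.
Qed.

Lemma slope_bound f M a b : lip1 f M -> a < b -> Rabs (slope f a b) <= M.
Proof.
  intros Hl Hab. unfold slope, Rdiv. rewrite Rabs_mult, Rabs_inv.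
  pose proof (Hl b a). rewrite (Rabs_right (b - a)) in * by lra.
  apply Rmult_le_reg_r with (b - a). lra.
  replace (Rabs (f b - f a) * / (b - a) * (b - a)) with (Rabs (f b - f a)) by (field; lra).
  lra.
Qed.

Definition gap f t h := slope f t (t + h) - slope f (t - h) t.

Lemma good_deriv f t : convex1 f ->
  (forall eps, 0 < eps -> exists h, 0 < h /\ gap f t h < eps) ->
  exists L,
   (forall eps, 0 < eps -> exists d, 0 < d /\ forall lam, 0 < lam < d ->
       Rabs ((f (t + lam) - f t) / lam - L) < eps) /\
   (forall eps, 0 < eps -> exists d, 0 < d /\ forall lam, 0 < lam < d ->
       Rabs ((f (t - lam) - f t) / lam - - L) < eps).
Proof.
  intros Hc Hg.
  set (E := fun v => exists h, 0 < h /\ v = slope f (t - h) t).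
  assert (HE : bound E).
  { exists (slope f t (t + 1)). intros v [h [Hh ->]].
    apply slope_mono; auto; lra. }
  assert (HE2 : exists v, E v) by (exists (slope f (t - 1) t); exists 1; split; lra).
  destruct (completeness E HE HE2) as [L [HL1 HL2]].
  assert (Hlo : forall h, 0 < h -> slope f (t - h) t <= L).
  { intros h Hh. apply HL1. exists h; split; auto. }
  assert (Hhi : forall h, 0 < h -> L <= slope f t (t + h)).
  { intros h Hh. apply HL2. intros v [h' [Hh' ->]]. apply slope_mono; auto; lra. }
  exists L; split.
  - intros eps Heps. destruct (Hg eps Heps) as [h [Hh Hgap]].
    exists h; split; auto. intros lam Hlam.
    assert (Q : (f (t + lam) - f t) / lam = slope f t (t + lam)).
    { unfold slope. f_equal. ring. }
    rewrite Q.
    assert (slope f t (t + lam) <= slope f t (t + h)) by (apply slope_mono; auto; lra).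
    pose proof (Hhi lam (proj1 Hlam)). pose proof (Hlo h Hh).
    unfold gap in Hgap. rewrite Rabs_right; lra.
  - intros eps Heps. destruct (Hg eps Heps) as [h [Hh Hgap]].
    exists h; split; auto. intros lam Hlam.
    assert (Q : (f (t - lam) - f t) / lam - - L = L - slope f (t - lam) t).
    { unfold slope. field. lra. }
    rewrite Q.
    assert (slope f (t - h) t <= slope f (t - lam) t) by (apply slope_mono; auto; lra).
    pose proof (Hlo lam (proj1 Hlam)). pose proof (Hhi h Hh).
    unfold gap in Hgap. rewrite Rabs_right; lra.
Qed.

Lemma abs_le_split x M : Rabs x <= M -> -M <= x <= M.
Proof. intros; split; [pose proof (Rle_abs (-x)); rewrite Rabs_Ropp in *; lra | pose proof (Rle_abs x); lra]. Qed.

Lemma big_nat M d : 0 <= M -> 0 < d -> exists m : nat, (0 < m)%nat /\ 2 * M < INR m * d.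
Proof.
  intros HM Hd.
  destruct (archimed_cor1 (d / (2 * M + 1))) as [m [Hm1 Hm2]].
  { apply Rdiv_lt_0_compat; lra. }
  exists m; split; auto.
  assert (Hm : 0 < INR m) by (apply lt_0_INR; auto).
  apply Rmult_lt_compat_r with (r := (2 * M + 1) * INR m) in Hm1; [|nra].
  replace (/ INR m * ((2 * M + 1) * INR m)) with (2 * M + 1) in Hm1 by (field; lra).
  replace (d / (2 * M + 1) * ((2 * M + 1) * INR m)) with (INR m * d) in Hm1 by (field; lra).
  lra.
Qed.

Lemma refine1 f M d a b : convex1 f -> lip1 f M -> 0 <= M -> 0 < d -> a < b ->
  exists a' b' h, a < a' < b' /\ b' < b /\ 0 < h /\
    forall t, a' <= t <= b' -> gap f t h < d.
Proof.
  intros Hc Hl HM Hd Hab.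
  destruct (big_nat M d HM Hd) as [m [Hm0 Hm]].
  set (n := (2 * m + 1)%nat).
  assert (Hn : 0 < INR n) by (apply lt_0_INR; unfold n; lia).
  set (w := (b - a) / INR n).
  assert (Hw : 0 < w) by (unfold w; apply Rdiv_lt_0_compat; lra).
  set (p := fun j : nat => a + INR j * w).
  assert (HpS : forall j, p (S j) = p j + w) by (intros; unfold p; rewrite S_INR; ring).
  set (s := fun j : nat => slope f (p j) (p (S j))).
  destruct (classic (exists i, (i + 3 <= n)%nat /\ s (i + 2)%nat - s i < d)) as [[i [Hi1 Hi2]]|Hno].
  - exists (p (S i)), (p (S (S i))), w.
    assert (Hpi : p (S i) > a).
    { unfold p. assert (0 < INR (S i)) by (apply lt_0_INR; lia). nra. }
    assert (Hpb : p (S (S i)) < b).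
    { unfold p. assert (INR (S (S i)) < INR n) by (apply lt_INR; lia).
      assert (INR n * w = b - a) by (unfold w; field; lra). nra. }
    split; [pose proof (HpS (S i)); lra|]. split; auto. split; auto.
    intros t Ht. unfold gap.
    replace (i + 2)%nat with (S (S i)) in Hi2 by lia.
    unfold s in Hi2.
    assert (slope f t (t + w) <= slope f (p (S (S i))) (p (S (S (S i))))).
    { pose proof (HpS (S (S i))); apply slope_mono; auto; lra. }
    assert (slope f (p i) (p (S i)) <= slope f (t - w) t).
    { pose proof (HpS i); pose proof (HpS (S i)); apply slope_mono; auto; lra. }
    lra.
  - assert (Hall : forall i, (i + 3 <= n)%nat -> s (i + 2)%nat - s i >= d).
    { intros i Hi. apply Rnot_lt_ge. intro C. apply Hno. exists i; auto. }
    assert (Hind : forall k, (2 * k + 1 <= n)%nat -> s (2 * k)%nat >= s 0%nat + INR k * d).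
    { induction k as [|k IH]; intros Hk.
      - simpl. lra.
      - pose proof (IH ltac:(lia)). pose proof (Hall (2 * k)%nat ltac:(lia)).
        replace (2 * S k)%nat with (2 * k + 2)%nat by lia. rewrite S_INR. lra. }
    pose proof (Hind m ltac:(unfold n; lia)).
    assert (B1 : Rabs (s (2 * m)%nat) <= M) by (apply (slope_bound f M); auto; rewrite HpS; lra).
    assert (B2 : Rabs (s 0%nat) <= M) by (apply (slope_bound f M); auto; rewrite HpS; lra).
    apply abs_le_split in B1. apply abs_le_split in B2. lra.
Qed.

Section Nest.
Variable F : nat -> R -> R.
Variable M : R.
Hypothesis Hc : forall k, convex1 (F k).
Hypothesis Hl : forall k, lip1 (F k) M.
Hypothesis HM : 0 <= M.

Definition goodI (m : nat) (d : R) (a b : R) :=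
  forall k, (k <= m)%nat -> exists h, 0 < h /\ forall t, a <= t <= b -> gap (F k) t h < d.

Lemma refine_multi d : 0 < d -> forall m a b, a < b ->
  exists a' b', a <= a' < b' /\ b' <= b /\ goodI m d a' b'.
Proof.
  intros Hd m. induction m as [|m IH]; intros a b Hab.
  - destruct (refine1 (F 0%nat) M d a b (Hc _) (Hl _) HM Hd Hab) as [a' [b' [h [H1 [H2 [H3 H4]]]]]].
    exists a', b'. split; [lra|]. split; [lra|].
    intros k Hk. assert (k = 0%nat) by lia. subst. exists h; auto.
  - destruct (IH a b Hab) as [a1 [b1 [H1 [H2 H3]]]].
    destruct (refine1 (F (S m)) M d a1 b1 (Hc _) (Hl _) HM Hd ltac:(lra)) as [a' [b' [h [G1 [G2 [G3 G4]]]]]].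
    exists a', b'. split; [lra|]. split; [lra|].
    intros k Hk. destruct (Nat.eq_dec k (S m)) as [->|Hne].
    + exists h; auto.
    + destruct (H3 k ltac:(lia)) as [h1 [Hh1 Hg]]. exists h1; split; auto.
      intros t Ht. apply Hg. lra.
Qed.

Lemma step_ex (m : nat) (ab : R * R) : exists ab' : R * R,
  fst ab < snd ab -> fst ab <= fst ab' /\ fst ab' < snd ab' /\ snd ab' <= snd ab /\
     goodI m (/ (INR m + 1)) (fst ab') (snd ab').
Proof.
  destruct (classic (fst ab < snd ab)) as [Hlt|Hn].
  - assert (Hd : 0 < / (INR m + 1)).
    { apply Rinv_0_lt_compat. pose proof (pos_INR m). lra. }
    destruct (refine_multi _ Hd m _ _ Hlt) as [a' [b' [H1 [H2 H3]]]].
    exists (a', b'). intros _. simpl. repeat split; try lra. exact H3.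
  - exists ab. intro C. contradiction.
Qed.

Definition stepf (m : nat) (ab : R * R) : R * R :=
  proj1_sig (constructive_indefinite_description _ (step_ex m ab)).

Lemma stepf_spec m ab : fst ab < snd ab ->
  fst ab <= fst (stepf m ab) /\ fst (stepf m ab) < snd (stepf m ab) /\
  snd (stepf m ab) <= snd ab /\ goodI m (/ (INR m + 1)) (fst (stepf m ab)) (snd (stepf m ab)).
Proof.
  unfold stepf. destruct (constructive_indefinite_description _ (step_ex m ab)) as [x Hx]. simpl.
  exact Hx.
Qed.

Fixpoint seqI (ab0 : R * R) (m : nat) : R * R :=
  match m with
  | O => ab0
  | S m' => stepf m' (seqI ab0 m')
  end.

Lemma one_d a b : a < b -> exists t, a < t < b /\
  forall k eps, 0 < eps -> exists h, 0 < h /\ gap (F k) t h < eps.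
Proof.
  intros Hab.
  set (ab0 := (a + (b - a) / 3, b - (b - a) / 3)).
  set (I := seqI ab0).
  assert (Hlt : forall m, fst (I m) < snd (I m)).
  { induction m as [|m IH]. unfold I; simpl; lra.
    unfold I; simpl. apply stepf_spec. exact IH. }
  assert (Hstep : forall m, fst (I m) <= fst (I (S m)) /\ snd (I (S m)) <= snd (I m)).
  { intros m. unfold I; simpl. pose proof (stepf_spec m (seqI ab0 m) (Hlt m)). tauto. }
  assert (Hmono : forall m k, fst (I m) <= fst (I (m + k)%nat) /\ snd (I (m + k)%nat) <= snd (I m)).
  { intros m k. induction k as [|k IH].
    - rewrite Nat.add_0_r. lra.
    - replace (m + S k)%nat with (S (m + k)) by lia. pose proof (Hstep (m + k)%nat). lra. }
  assert (Hab_le : forall m j, fst (I j) <= snd (I m)).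
  { intros m j. destruct (Nat.le_ge_cases m j) as [Hmj|Hmj].
    - replace j with (m + (j - m))%nat by lia. pose proof (Hmono m (j - m)%nat).
      pose proof (Hlt (m + (j - m))%nat). lra.
    - replace m with (j + (m - j))%nat by lia. pose proof (Hmono j (m - j)%nat).
      pose proof (Hlt (j + (m - j))%nat). lra. }
  set (E := fun v => exists m, v = fst (I m)).
  assert (HE : bound E). { exists (snd (I 0%nat)). intros v [m ->]. apply Hab_le. }
  assert (HE2 : exists v, E v) by (exists (fst (I 0%nat)); exists 0%nat; auto).
  destruct (completeness E HE HE2) as [t [Ht1 Ht2]].
  assert (Hin : forall m, fst (I m) <= t <= snd (I m)).
  { intros m. split. apply Ht1. exists m; auto.
    apply Ht2. intros v [j ->]. apply Hab_le. }
  exists t. split.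
  { pose proof (Hin 0%nat). unfold I in H; simpl in H. lra. }
  intros k eps Heps.
  destruct (archimed_cor1 eps Heps) as [n [Hn1 Hn2]].
  set (m := (n + k)%nat).
  assert (Hg : goodI m (/ (INR m + 1)) (fst (I (S m))) (snd (I (S m)))).
  { unfold I; simpl. apply stepf_spec. apply Hlt. }
  destruct (Hg k ltac:(unfold m; lia)) as [h [Hh Hgap]].
  exists h. split; auto.
  apply Rlt_le_trans with (/ (INR m + 1)). apply Hgap. apply Hin.
  apply Rle_trans with (/ INR n); [|lra].
  apply Rinv_le_contravar. apply lt_0_INR; auto.
  unfold m. rewrite plus_INR. pose proof (pos_INR k). lra.
Qed.

End Nest.

Lemma sumfin_ext n (f g : Fin.t n -> R) : (forall i, f i = g i) -> sumfin n f = sumfin n g.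
Proof.
  revert f g; induction n as [|n IH]; intros f g Hfg; simpl; auto.
  rewrite Hfg. f_equal. apply IH. intros; apply Hfg.
Qed.

Lemma sumfin_add n (f g : Fin.t n -> R) : sumfin n (fun i => f i + g i) = sumfin n f + sumfin n g.
Proof. revert f g; induction n as [|n IH]; intros f g; simpl. ring. rewrite IH. ring. Qed.

Lemma sumfin_scale n a (f : Fin.t n -> R) : sumfin n (fun i => a * f i) = a * sumfin n f.
Proof. revert f; induction n as [|n IH]; intros f; simpl. ring. rewrite IH. ring. Qed.

Lemma sumfin_nonneg n (f : Fin.t n -> R) : (forall i, 0 <= f i) -> 0 <= sumfin n f.
Proof.
  revert f; induction n as [|n IH]; intros f Hf; simpl. lra.
  pose proof (Hf Fin.F1). pose proof (IH (fun i => f (Fin.FS i)) (fun i => Hf _)). lra.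
Qed.

Lemma sumsq_nonneg n (x : vec n) : 0 <= sumfin n (fun i => x i ^ 2).
Proof. apply sumfin_nonneg. intros; nra. Qed.

Lemma quad_disc A B C : (forall t, 0 <= A + 2 * t * B + t * t * C) -> 0 <= C -> B * B <= A * C.
Proof.
  intros Hq HC. pose proof (Hq 0). destruct (Rle_lt_or_eq_dec _ _ HC) as [Hp|H0].
  - pose proof (Hq (- B / C)).
    replace (A + 2 * (- B / C) * B + - B / C * (- B / C) * C) with (A - B * B / C) in H0 by (field; lra).
    assert (B * B / C <= A) by lra.
    apply Rmult_le_compat_r with (r := C) in H1; [|lra].
    replace (B * B / C * C) with (B * B) in H1 by (field; lra). lra.
  - subst C. destruct (Req_dec B 0) as [->|HB]. nra.
    pose proof (Hq (- (A + 1) / (2 * B))).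
    replace (A + 2 * (- (A + 1) / (2 * B)) * B + - (A + 1) / (2 * B) * (- (A + 1) / (2 * B)) * 0)
      with (-1) in H0 by (field; lra). lra.
Qed.

Lemma cauchy_schwarz n (x y : vec n) :
  sumfin n (fun i => x i * y i) <= sqrt (sumfin n (fun i => x i ^ 2)) * sqrt (sumfin n (fun i => y i ^ 2)).
Proof.
  set (A := sumfin n (fun i => x i ^ 2)). set (C := sumfin n (fun i => y i ^ 2)).
  set (B := sumfin n (fun i => x i * y i)).
  assert (HA : 0 <= A) by apply sumsq_nonneg. assert (HC : 0 <= C) by apply sumsq_nonneg.
  assert (Hq : forall t, 0 <= A + 2 * t * B + t * t * C).
  { intro t. assert (E : A + 2 * t * B + t * t * C = sumfin n (fun i => (x i + t * y i) ^ 2)).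
    { rewrite (sumfin_ext n _ (fun i => (x i ^ 2 + (2 * t) * (x i * y i)) + (t * t) * (y i ^ 2))) by (intros; ring).
      rewrite !sumfin_add, !sumfin_scale. unfold A, B, C. ring. }
    rewrite E. apply sumfin_nonneg. intros; apply pow2_ge_0. }
  pose proof (quad_disc A B C Hq HC).
  rewrite <- sqrt_mult by auto.
  destruct (Rle_or_lt B 0). pose proof (sqrt_pos (A * C)); lra.
  rewrite <- (sqrt_square B) by lra. apply sqrt_le_1_alt. nra.
Qed.

Lemma vnorm_nonneg n (x : vec n) : 0 <= vnorm x.
Proof. apply sqrt_pos. Qed.

Lemma vnorm_triangle n (x y : vec n) : vnorm (vadd x y) <= vnorm x + vnorm y.
Proof.
  unfold vnorm, vadd.
  set (A := sumfin n (fun i => x i ^ 2)). set (C := sumfin n (fun i => y i ^ 2)).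
  pose proof (cauchy_schwarz n x y).
  assert (E : sumfin n (fun i => (x i + y i) ^ 2) = A + 2 * sumfin n (fun i => x i * y i) + C).
  { rewrite (sumfin_ext n _ (fun i => (x i ^ 2 + 2 * (x i * y i)) + y i ^ 2)) by (intros; ring).
    rewrite !sumfin_add, !sumfin_scale. unfold A, C. ring. }
  rewrite E. pose proof (sqrt_pos A). pose proof (sqrt_pos C).
  assert (HA : 0 <= A) by apply sumsq_nonneg. assert (HC : 0 <= C) by apply sumsq_nonneg.
  rewrite <- (sqrt_square (sqrt A + sqrt C)) by lra.
  apply sqrt_le_1_alt.
  replace ((sqrt A + sqrt C) * (sqrt A + sqrt C)) with
    (sqrt A * sqrt A + 2 * (sqrt A * sqrt C) + sqrt C * sqrt C) by ring.
  rewrite !sqrt_sqrt by auto. fold A C in H. lra.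
Qed.

Lemma vnorm_scale n a (x : vec n) : vnorm (vscale a x) = Rabs a * vnorm x.
Proof.
  unfold vnorm, vscale.
  rewrite (sumfin_ext n _ (fun i => a ^ 2 * x i ^ 2)) by (intros; ring).
  rewrite sumfin_scale. rewrite sqrt_mult_alt by (apply pow2_ge_0).
  f_equal. rewrite <- sqrt_Rsqr_abs. unfold Rsqr. f_equal. ring.
Qed.

Lemma vdist_triangle n (x y z : vec n) : vdist x z <= vdist x y + vdist y z.
Proof.
  unfold vdist. replace (vsub x z) with (vadd (vsub x y) (vsub y z)).
  apply vnorm_triangle.
  apply functional_extensionality; intros; unfold vadd, vsub; ring.
Qed.

Lemma vdist_sym n (x y : vec n) : vdist x y = vdist y x.
Proof.
  unfold vdist. replace (vsub x y) with (vscale (-1) (vsub y x)).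
  rewrite vnorm_scale. rewrite Rabs_left by lra. ring.
  apply functional_extensionality; intros; unfold vscale, vsub; ring.
Qed.

Lemma vdist_self n (x : vec n) : vdist x x = 0.
Proof.
  unfold vdist. replace (vsub x x) with (vscale 0 x).
  rewrite vnorm_scale, Rabs_R0. ring.
  apply functional_extensionality; intros; unfold vscale, vsub; ring.
Qed.

Lemma ball_open N (c0 : vec N) (e : R) : Defs.open_set (fun z : vec N => vdist z c0 < e).
Proof.
  intros z Hz. exists (e - vdist z c0). split. lra.
  intros w Hw. pose proof (vdist_triangle N w z c0). lra.
Qed.

Lemma dense_seq N (B : vec N -> Prop) : compact_set B -> nonempty_interior B ->
  exists y : nat -> vec N, (forall k, B (y k)) /\
    forall z, B z -> forall e, 0 < e -> exists k, vdist z (y k) < e.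
Proof.
  intros Hc [x0 [e0 [He0 Hx0]]].
  assert (Hy0 : B x0) by (apply Hx0; rewrite vdist_self; lra).
  assert (Hl : forall n : nat, exists l : list {z | B z}, forall z, B z ->
     exists i, In i l /\ vdist z (proj1_sig i) < / (INR n + 1)).
  { intros n. apply (Hc {z | B z} (fun i z => vdist z (proj1_sig i) < / (INR n + 1))).
    - intros i. apply ball_open.
    - intros z Hz. exists (exist _ z Hz). simpl. rewrite vdist_self.
      apply Rinv_0_lt_compat. pose proof (pos_INR n). lra. }
  destruct (choice _ Hl) as [L HL].
  set (d := exist B x0 Hy0).
  exists (fun k => proj1_sig (nth (snd (of_nat k)) (L (fst (of_nat k))) d)).
  split.
  - intros k. apply proj2_sig.
  - intros z Hz e He.
    destruct (archimed_cor1 e He) as [n [Hn1 Hn2]].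
    destruct (HL n z Hz) as [i [Hi Hd]].
    destruct (In_nth _ _ d Hi) as [j [_ Hj]].
    exists (to_nat (n, j)). rewrite cancel_of_to. simpl. subst i. unfold d.
    apply Rlt_le_trans with (/ (INR n + 1)); [exact Hd|].
    apply Rle_trans with (/ INR n); [|lra].
    apply Rinv_le_contravar. apply lt_0_INR; auto. lra.
Qed.

Theorem proposition3p2 (N : nat) (H : vec N -> vec N -> R) (Lam : R)
  (hskew : skew_symmetric H) (hcc : convex_concave H)
  (hLam : 0 < Lam)
  (hlip : forall x1 y1 x2 y2,
     Rabs (H x1 y1 - H x2 y2) <= Lam * vdist x1 x2 + Lam * vdist y1 y2)
  (c : vec N) (r : R) (hr : 0 < r)
  (B : vec N -> Prop) (hBc : compact_set B) (hBi : nonempty_interior B)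
  (u : vec N) :
  exists A' : vec N -> Prop,
    dense_in A' (closed_ball c r) /\
    forall x, A' x ->
      exists Bxu : vec N -> Prop,
        dense_in Bxu B /\
        forall y, Bxu y ->
          exists L, dir_deriv1 H x y u L /\ dir_deriv1 H x y (vopp u) (- L).
Proof.
  destruct (dense_seq N B hBc hBi) as [ys [HyB Hyd]].
  exists (fun x => closed_ball c r x /\ forall k, exists L,
            dir_deriv1 H x (ys k) u L /\ dir_deriv1 H x (ys k) (vopp u) (- L)).
  split.
  2:{ intros x [_ Hx]. exists (fun z => exists k, z = ys k). split.
      - split. intros z [k ->]. apply HyB.
        intros z Hz e He. destruct (Hyd z Hz e He) as [k Hk]. exists (ys k); split; eauto.
      - intros y [k ->]. apply Hx. }
  split. { intros x [Hx _]. exact Hx. }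
  intros x0 Hx0 e He. unfold closed_ball in Hx0.
  set (s := Rmin 1 (e / (4 * r))).
  assert (Hs0 : 0 < s) by (unfold s; apply Rmin_glb_lt; [lra| apply Rdiv_lt_0_compat; lra]).
  assert (Hs1 : s <= 1) by (unfold s; apply Rmin_l).
  assert (Hs2 : s * r <= e / 4).
  { assert (s <= e / (4 * r)) by (unfold s; apply Rmin_r).
    apply Rmult_le_compat_r with (r := r) in H0; [|lra].
    replace (e / (4 * r) * r) with (e / 4) in H0 by (field; lra). lra. }
  set (x1 := fun i => x0 i + s * (c i - x0 i)).
  set (nu := vnorm u). assert (Hnu : 0 <= nu) by apply vnorm_nonneg.
  set (tau := s * r / (nu + 1)).
  assert (Htau : 0 < tau) by (unfold tau; apply Rdiv_lt_0_compat; nra).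
  set (F := fun k t => H (fun i => x1 i + t * u i) (ys k)).
  set (M := Lam * nu).
  assert (HM : 0 <= M) by (unfold M; nra).
  assert (Fc : forall k, convex1 (F k)).
  { intros k a b s' Hs'. unfold F.
    pose proof (proj1 hcc (ys k) (fun i => x1 i + a * u i) (fun i => x1 i + b * u i) s' Hs') as K.
    replace (vadd (vscale s' (fun i => x1 i + a * u i)) (vscale (1 - s') (fun i => x1 i + b * u i)))
      with (fun i => x1 i + (s' * a + (1 - s') * b) * u i) in K.
    exact K.
    apply functional_extensionality; intros; unfold vadd, vscale; ring. }
  assert (Fl : forall k, lip1 (F k) M).
  { intros k a b. unfold F.
    pose proof (hlip (fun i => x1 i + a * u i) (ys k) (fun i => x1 i + b * u i) (ys k)) as K.
    rewrite vdist_self in K.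
    replace (vdist (fun i => x1 i + a * u i) (fun i => x1 i + b * u i)) with (Rabs (a - b) * nu) in K.
    unfold M. lra.
    unfold vdist, nu. rewrite <- vnorm_scale. f_equal.
    apply functional_extensionality; intros; unfold vsub, vscale; ring. }
  destruct (one_d F M Fc Fl HM 0 tau Htau) as [t [Ht Hgood]].
  set (x := fun i => x1 i + t * u i).
  exists x. split.
  - split.
    + unfold closed_ball.
      assert (E1 : vdist x x1 = t * nu).
      { unfold vdist, nu. replace (vsub x x1) with (vscale t u).
        rewrite vnorm_scale, Rabs_right by lra. ring.
        apply functional_extensionality; intros; unfold vsub, vscale, x; ring. }
      assert (E2 : vdist x1 c = (1 - s) * vdist x0 c).
      { unfold vdist. replace (vsub x1 c) with (vscale (1 - s) (vsub x0 c)).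
        rewrite vnorm_scale, Rabs_right by lra. ring.
        apply functional_extensionality; intros; unfold vsub, vscale, x1; ring. }
      pose proof (vdist_triangle N x x1 c).
      assert (t * nu <= s * r).
      { apply Rle_trans with (t * (nu + 1)). nra.
        assert (t * (nu + 1) <= tau * (nu + 1)) by nra.
        unfold tau in H1. replace (s * r / (nu + 1) * (nu + 1)) with (s * r) in H1 by (field; lra). lra. }
      assert ((1 - s) * vdist x0 c <= (1 - s) * r) by (apply Rmult_le_compat_l; lra).
      nra.
    + intros k. destruct (good_deriv (F k) t (Fc k) (Hgood k)) as [L [HL1 HL2]].
      exists L. split.
      * intros eps Heps. destruct (HL1 eps Heps) as [d [Hd Hdd]]. exists d; split; auto.
        intros lam Hlam. specialize (Hdd lam Hlam). unfold F in Hdd.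
        replace (vadd x (vscale lam u)) with (fun i => x1 i + (t + lam) * u i). exact Hdd.
        apply functional_extensionality; intros; unfold vadd, vscale, x; ring.
      * intros eps Heps. destruct (HL2 eps Heps) as [d [Hd Hdd]]. exists d; split; auto.
        intros lam Hlam. specialize (Hdd lam Hlam). unfold F in Hdd.
        replace (vadd x (vscale lam (vopp u))) with (fun i => x1 i + (t - lam) * u i). exact Hdd.
        apply functional_extensionality; intros; unfold vadd, vscale, vopp, x; ring.
  - assert (E1 : vdist x1 x = t * nu).
    { unfold vdist, nu. replace (vsub x1 x) with (vscale (-t) u).
      rewrite vnorm_scale, Rabs_left by lra. ring.
      apply functional_extensionality; intros; unfold vsub, vscale, x; ring. }
    assert (E2 : vdist x0 x1 = s * vdist x0 c).
    { unfold vdist. replace (vsub x0 x1) with (vscale s (vsub x0 c)).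
      rewrite vnorm_scale, Rabs_right by lra. ring.
      apply functional_extensionality; intros; unfold vsub, vscale, x1; ring. }
    pose proof (vdist_triangle N x0 x1 x).
    assert (t * nu <= s * r).
    { apply Rle_trans with (t * (nu + 1)). nra.
      assert (t * (nu + 1) <= tau * (nu + 1)) by nra.
      unfold tau in H1. replace (s * r / (nu + 1) * (nu + 1)) with (s * r) in H1 by (field; lra). lra. }
    assert (s * vdist x0 c <= s * r) by (apply Rmult_le_compat_l; lra).
    lra.
Qed.
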